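(* (i) If $f(z)=z+\sum_{n=2}^\infty a_nz^n\in\mathcal{A}$ satisfies $\sum_{n=2}^\infty(2n-1)|a_n|\le1$, then $f\in\mathcal{S}^*_{car}$. (ii) For $n\in\{2,3,\ldots\}$ and $a_n\in\mathbb{C}$, the function $f_n(z)=z+a_nz^n$ belongs to $\mathcal{S}^*_{car}$ if and only if $|a_n|\le 1/(2n-1)$.
   Context: $\mathbb{D}=\{z:|z|<1\}$; $\mathcal{A}$ is the class of analytic $f$ on $\mathbb{D}$ with $f(0)=0$, $f'(0)=1$. $F\prec G$ means $F=G\circ w$ for an analytic $w:\mathbb{D}\to\mathbb{D}$ with $w(0)=0$. $\mathcal{S}^*_{car}$ is the class of $f\in\mathcal{A}$ with $zf'(z)/f(z)\prec 1+z+z^2/2$ in $\mathbb{D}$. *)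

(* Defs.v *)
From Stdlib Require Import Reals.
From Coquelicot Require Import Coquelicot.
Open Scope R_scope.

Definition inD (z : C) : Prop := Cmod z < 1.

Definition analytic_D (f : C -> C) : Prop :=
  forall z, inD z -> @ex_derive C_AbsRing C_NormedModule f z.

Definition classA (f : C -> C) : Prop :=
  analytic_D f /\ f 0%R = 0%R /\ C_derive f 0%R = 1%R.

Definition subordinate (F G : C -> C) : Prop :=
  exists w : C -> C, analytic_D w /\ (forall z, inD z -> inD (w z)) /\
    w 0%R = 0%R /\ forall z, inD z -> F z = G (w z).

Definition phi_car (z : C) : C := (1%R + z + z * z / 2%R)%C.

(* z f'(z) / f(z), extended at the removable singularity z = 0 by its limit 1
   (for f in A). *)
Definition starlike_quot (f : C -> C) (z : C) : C :=
  if Req_EM_T (Cmod z) 0 then 1%R else (z * C_derive f z / f z)%C.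

(* S*_car: f in A, z f'/f is defined (f nonvanishing on D \ {0}) and
   z f'(z)/f(z) is subordinate to 1 + z + z^2/2. *)
Definition Scar (f : C -> C) : Prop :=
  classA f /\ (forall z, inD z -> z <> 0%R -> f z <> 0%R) /\
  subordinate (starlike_quot f) phi_car.

(* Coefficient sequence of z + sum_{n>=2} a_n z^n. *)
Definition coeffs (a : nat -> C) (n : nat) : C :=
  match n with 0 => 0%R | 1 => 1%R | _ => a n end.

(* Main.v *)
Require Import Defs.
From Stdlib Require Import Reals Lra Psatz Lia ClassicalEpsilon.
From Coquelicot Require Import Coquelicot.
Open Scope R_scope.

Definition Cdiff (f : C -> C) (z l : C) : Prop :=
  forall eps, 0 < eps -> exists d, 0 < d /\ forall y, Cmod (y - z)%C < d ->
    Cmod (f y - f z - (y - z) * l)%C <= eps * Cmod (y - z)%C.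

Definition Ccont (k : C -> C) (z : C) : Prop :=
  forall eps, 0 < eps -> exists d, 0 < d /\ forall y, Cmod (y - z)%C < d ->
    Cmod (k y - k z)%C <= eps.

Lemma Cdiff_is_derive f z l : Cdiff f z l -> is_derive f z l.
Proof.
intros H. split. apply is_linear_scal_l.
intros x Hx. apply (@is_filter_lim_locally_unique C_AbsRing (AbsRing_NormedModule C_AbsRing)) in Hx. subst x.
intros eps. destruct (H eps (cond_pos eps)) as [d [Hd H1]].
assert (Hp : 0 < d / @norm_factor C_AbsRing (AbsRing_NormedModule C_AbsRing)).
{ apply Rdiv_lt_0_compat; auto. apply norm_factor_gt_0. }
exists (mkposreal _ Hp). intros y Hy. apply (@norm_compat2 C_AbsRing (AbsRing_NormedModule C_AbsRing)) in Hy. simpl in Hy.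
change (Cmod (f y - f z - (y - z) * l)%C <= eps * Cmod (y - z)%C).
apply H1. change (Cmod (y - z)%C) with (@norm C_AbsRing (AbsRing_NormedModule C_AbsRing) (minus y z)).
replace d with (@norm_factor C_AbsRing (AbsRing_NormedModule C_AbsRing) * (d / @norm_factor C_AbsRing (AbsRing_NormedModule C_AbsRing))). exact Hy.
field. apply Rgt_not_eq, norm_factor_gt_0.
Qed.

Lemma is_derive_Cdiff f z l : is_derive f z l -> Cdiff f z l.
Proof.
intros [_ H]. specialize (H z (fun P HP => HP)).
intros eps Heps. destruct (H (mkposreal eps Heps)) as [e He].
exists e. split. apply cond_pos. intros y Hy. apply He. apply (@norm_compat1 C_AbsRing (AbsRing_NormedModule C_AbsRing)). exact Hy.
Qed.

Lemma Cdiff_lip f z l : Cdiff f z l -> exists d, 0 < d /\ forall y, Cmod (y - z)%C < d ->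
  Cmod (f y - f z)%C <= (1 + Cmod l) * Cmod (y - z)%C.
Proof.
intros H. destruct (H 1 Rlt_0_1) as [d [Hd H1]]. exists d; split; auto.
intros y Hy. specialize (H1 y Hy).
replace (f y - f z)%C with ((f y - f z - (y - z) * l) + (y - z) * l)%C by ring.
eapply Rle_trans. apply Cmod_triangle. rewrite Cmod_mult. nra.
Qed.

Lemma Cdiff_cont f z l : Cdiff f z l -> Ccont f z.
Proof.
intros H eps Heps. destruct (Cdiff_lip f z l H) as [d [Hd H1]].
assert (0 < 1 + Cmod l) by (pose proof (Cmod_ge_0 l); lra).
exists (Rmin d (eps / (1 + Cmod l))). split.
apply Rmin_glb_lt; auto. apply Rdiv_lt_0_compat; auto.
intros y Hy. eapply Rle_trans. apply H1. eapply Rlt_le_trans. apply Hy. apply Rmin_l.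
assert (Cmod (y - z)%C < eps / (1 + Cmod l)). eapply Rlt_le_trans. apply Hy. apply Rmin_r.
apply Rmult_lt_compat_l with (r := 1 + Cmod l) in H2; auto.
replace ((1 + Cmod l) * (eps / (1 + Cmod l))) with eps in H2 by (field; lra). lra.
Qed.

Lemma chain_lemma (u k s : C -> C) z u' :
  Cdiff u z u' -> Ccont k z ->
  (exists d0, 0 < d0 /\ forall y, Cmod (y - z)%C < d0 -> (s y - s z = (u y - u z) * k y)%C) ->
  Cdiff s z (u' * k z)%C.
Proof.
intros Hu Hk [d0 [Hd0 Hs]] eps Heps.
set (K := Cmod (k z)). set (U := Cmod u').
assert (HK : 0 <= K) by apply Cmod_ge_0. assert (HU : 0 <= U) by apply Cmod_ge_0.
destruct (Hu (eps / (2 * (K + 1)))) as [d1 [Hd1 H1]]. apply Rdiv_lt_0_compat; lra.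
destruct (Hk (eps / (2 * (U + 1)))) as [d2 [Hd2 H2]]. apply Rdiv_lt_0_compat; lra.
destruct (Hk 1 Rlt_0_1) as [d3 [Hd3 H3]].
exists (Rmin d0 (Rmin d1 (Rmin d2 d3))). split.
repeat apply Rmin_glb_lt; auto.
intros y Hy.
assert (Hy0 : Cmod (y - z)%C < d0) by (eapply Rlt_le_trans; [apply Hy|]; apply Rmin_l).
assert (Hy1 : Cmod (y - z)%C < d1) by (eapply Rlt_le_trans; [apply Hy|]; 
  eapply Rle_trans; [apply Rmin_r|]; apply Rmin_l).
assert (Hy2 : Cmod (y - z)%C < d2) by (eapply Rlt_le_trans; [apply Hy|]; 
  eapply Rle_trans; [apply Rmin_r|]; eapply Rle_trans; [apply Rmin_r|]; apply Rmin_l).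
assert (Hy3 : Cmod (y - z)%C < d3) by (eapply Rlt_le_trans; [apply Hy|]; 
  eapply Rle_trans; [apply Rmin_r|]; eapply Rle_trans; [apply Rmin_r|]; apply Rmin_r).
specialize (H1 y Hy1). specialize (H2 y Hy2). specialize (H3 y Hy3).
rewrite (Hs y Hy0).
replace ((u y - u z) * k y - (y - z) * (u' * k z))%C with
  ((u y - u z - (y - z) * u') * k y + (y - z) * u' * (k y - k z))%C by ring.
eapply Rle_trans. apply Cmod_triangle. rewrite !Cmod_mult.
assert (Hky : Cmod (k y) <= K + 1).
{ replace (k y) with (k y - k z + k z)%C by ring. eapply Rle_trans. apply Cmod_triangle. fold K. lra. }
set (E := Cmod (y - z)%C). fold E in H1. fold U.
assert (0 <= E) by apply Cmod_ge_0.
assert (0 <= Cmod (u y - u z - (y - z) * u')%C) by apply Cmod_ge_0.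
assert (0 <= Cmod (k y - k z)%C) by apply Cmod_ge_0.
assert (A1 : Cmod (u y - u z - (y - z) * u')%C * Cmod (k y) <= eps / 2 * E).
{ eapply Rle_trans. apply Rmult_le_compat_l. auto. apply Hky.
  eapply Rle_trans. apply Rmult_le_compat_r. lra. apply H1.
  right. field. lra. }
assert (A2 : E * U * Cmod (k y - k z)%C <= eps / 2 * E).
{ eapply Rle_trans. apply Rmult_le_compat_l. nra. apply H2.
  replace (E * U * (eps / (2 * (U + 1)))) with (eps / 2 * E * (U / (U + 1))) by (field; lra).
  rewrite <- (Rmult_1_r (eps / 2 * E)) at 2. apply Rmult_le_compat_l. nra.
  apply Rmult_le_reg_r with (U + 1). lra. unfold Rdiv. rewrite Rmult_assoc, Rinv_l; lra. }
lra.
Qed.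

Lemma Cdiff_is_derive_K f z l : Cdiff f z l -> @is_derive C_AbsRing (AbsRing_NormedModule C_AbsRing) f z l.
Proof.
intros H. split. apply is_linear_scal_l.
intros x Hx. apply (@is_filter_lim_locally_unique C_AbsRing (AbsRing_NormedModule C_AbsRing)) in Hx. subst x.
intros eps. destruct (H eps (cond_pos eps)) as [d [Hd H1]].
assert (Hp : 0 < d / @norm_factor C_AbsRing (AbsRing_NormedModule C_AbsRing)).
{ apply Rdiv_lt_0_compat; auto. apply norm_factor_gt_0. }
exists (mkposreal _ Hp). intros y Hy. apply (@norm_compat2 C_AbsRing (AbsRing_NormedModule C_AbsRing)) in Hy. simpl in Hy.
change (Cmod (f y - f z - (y - z) * l)%C <= eps * Cmod (y - z)%C).
apply H1. change (Cmod (y - z)%C) with (@norm C_AbsRing (AbsRing_NormedModule C_AbsRing) (minus y z)).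
replace d with (@norm_factor C_AbsRing (AbsRing_NormedModule C_AbsRing) * (d / @norm_factor C_AbsRing (AbsRing_NormedModule C_AbsRing))). exact Hy.
field. apply Rgt_not_eq, norm_factor_gt_0.
Qed.

Lemma is_derive_Cdiff_K f z l : @is_derive C_AbsRing (AbsRing_NormedModule C_AbsRing) f z l -> Cdiff f z l.
Proof.
intros [_ H]. specialize (H z (fun P HP => HP)).
intros eps Heps. destruct (H (mkposreal eps Heps)) as [e He].
exists e. split. apply cond_pos. intros y Hy. apply He. apply (@norm_compat1 C_AbsRing (AbsRing_NormedModule C_AbsRing)). exact Hy.
Qed.
Lemma Cmod_sq (z : C) : Cmod z * Cmod z = fst z * fst z + snd z * snd z.
Proof. unfold Cmod. rewrite sqrt_sqrt. ring. nra. Qed.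

Lemma Cmod_re (z : C) : fst z <= Cmod z.
Proof. pose proof (re_le_Cmod z). unfold Re in H. pose proof (Rle_abs (fst z)). lra. Qed.

Lemma Cmod_re' (z : C) : - fst z <= Cmod z.
Proof. pose proof (re_le_Cmod z). unfold Re in H. pose proof (Rabs_maj2 (fst z)). lra. Qed.

Lemma Cmod_im (z : C) : snd z <= Cmod z.
Proof. pose proof (Rmax_Cmod z). pose proof (Rle_abs (snd z)). pose proof (Rmax_r (Rabs (fst z)) (Rabs (snd z))). lra. Qed.

Lemma Cinv_cont (w : C) : w <> (RtoC 0) -> Ccont Cinv w.
Proof.
intros Hw eps Heps. assert (HW : 0 < Cmod w) by (apply Cmod_gt_0; auto).
exists (Rmin (Cmod w / 2) (eps * (Cmod w * Cmod w) / 2)). split.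
apply Rmin_glb_lt; [lra| ]. apply Rdiv_lt_0_compat; [|lra]. apply Rmult_lt_0_compat; nra.
intros v Hv.
assert (H1 : Cmod (v - w)%C < Cmod w / 2) by (eapply Rlt_le_trans; [apply Hv|apply Rmin_l]).
assert (H2 : Cmod (v - w)%C < eps * (Cmod w * Cmod w) / 2) by (eapply Rlt_le_trans; [apply Hv|apply Rmin_r]).
assert (Hv' : Cmod w / 2 <= Cmod v).
{ pose proof (Cmod_triangle (w - v)%C v). 
  replace (w - v + v)%C with w in H by ring.
  replace (w - v)%C with (-(v - w))%C in H by ring. rewrite Cmod_opp in H. lra. }
assert (Hv0 : v <> (RtoC 0)). { intro E. subst v. rewrite Cmod_0 in Hv'. lra. }
replace (/ v - / w)%C with ((w - v) / (v * w))%C by (field; auto).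
rewrite Cmod_div by (apply Cmult_neq_0; auto).
rewrite Cmod_mult. replace (w - v)%C with (-(v - w))%C by ring. rewrite Cmod_opp.
apply Rle_trans with (Cmod (v - w)%C / (Cmod w / 2 * Cmod w)).
{ unfold Rdiv. apply Rmult_le_compat_l. apply Cmod_ge_0. apply Rinv_le_contravar.
  nra. apply Rmult_le_compat_r; lra. }
apply Rmult_le_reg_r with (Cmod w / 2 * Cmod w). nra.
unfold Rdiv at 1. rewrite Rmult_assoc, Rinv_l by nra. nra.
Qed.

Lemma Cdiff_id (z : C) : Cdiff (fun y => y) z 1%C.
Proof.
intros eps Heps. exists 1. split. lra. intros y _.
replace (y - z - (y - z) * 1)%C with (RtoC 0) by ring. rewrite Cmod_0.
pose proof (Cmod_ge_0 (y - z)%C). nra.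
Qed.

Lemma Cinv_diff (z : C) : z <> (RtoC 0) -> exists l, Cdiff Cinv z l.
Proof.
intros Hz. exists (1 * (fun y => (- / y * / z)%C) z)%C.
apply (chain_lemma (fun y => y) (fun y => (- / y * / z)%C) Cinv z (RtoC 1)). apply Cdiff_id.
- intros eps Heps. assert (HW : 0 < Cmod z) by (apply Cmod_gt_0; auto).
  destruct (Cinv_cont z Hz (eps * Cmod z)) as [d [Hd H]]. nra.
  exists d. split; auto. intros y Hy. specialize (H y Hy).
  replace (- / y * / z - - / z * / z)%C with (- ((/ y - / z) * / z))%C by (generalize (/ y)%C (/ z)%C; intros; ring). rewrite Cmod_opp.
  rewrite Cmod_mult, Cmod_inv by auto.
  apply Rmult_le_reg_r with (Cmod z). auto. rewrite Rmult_assoc, Rinv_l by lra. lra.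
- assert (HW : 0 < Cmod z) by (apply Cmod_gt_0; auto).
  exists (Cmod z). split; auto. intros y Hy.
  assert (y <> (RtoC 0)).
  { intro E; subst y. replace (0 - z)%C with (- z)%C in Hy by ring. rewrite Cmod_opp in Hy. lra. }
  simpl. field. auto.
Qed.

Definition csqrt (u : C) : C :=
  (sqrt ((Cmod u + fst u) / 2), snd u / (2 * sqrt ((Cmod u + fst u) / 2))).

Lemma csqrt_re (u : C) : 0 < fst u -> 0 < fst (csqrt u).
Proof.
intros H. simpl. apply sqrt_lt_R0. pose proof (Cmod_ge_0 u). lra.
Qed.

Lemma csqrt_sq (u : C) : 0 < fst u -> (csqrt u * csqrt u)%C = u.
Proof.
intros H. pose proof (Cmod_ge_0 u) as H0. pose proof (Cmod_sq u) as Hs.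
destruct u as [x y]. simpl in *.
set (r := sqrt ((Cmod (x, y) + x) / 2)).
assert (Hr : r * r = (Cmod (x, y) + x) / 2) by (unfold r; apply sqrt_sqrt; lra).
assert (Hr0 : 0 < r) by (unfold r; apply sqrt_lt_R0; lra).
unfold Cmult; simpl. fold r. f_equal.
- replace (y / (2 * r) * (y / (2 * r))) with (y * y / (4 * (r * r))) by (field; lra).
  rewrite Hr. assert (0 < Cmod (x, y) + x) by lra.
  replace (y * y) with ((Cmod (x, y) - x) * (Cmod (x, y) + x)) by nra. field. lra.
- field. lra.
Qed.

Lemma csqrt_disk (u : C) : Cmod (u - 1)%C < 1 -> Cmod (csqrt u - 1)%C < 1.
Proof.
intros H. assert (Hu : 0 < fst u).
{ pose proof (Cmod_re' (u - 1)%C). destruct u; simpl in *. lra. }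
pose proof (csqrt_re u Hu). pose proof (csqrt_sq u Hu).
set (s := csqrt u) in *.
assert (E : (u - 1 = (s - 1) * (s + 1))%C) by (rewrite <- H1; ring).
rewrite E, Cmod_mult in H.
assert (Hab : Cmod (s - 1)%C * Cmod (s - 1)%C < Cmod (s + 1)%C * Cmod (s + 1)%C).
{ rewrite !Cmod_sq. destruct s; simpl in *. nra. }
pose proof (Cmod_ge_0 (s - 1)%C). pose proof (Cmod_ge_0 (s + 1)%C). nra.
Qed.

Lemma sqrt_diff (u : C -> C) (z u' : C) : Cdiff u z u' ->
  (exists d, 0 < d /\ forall y, Cmod (y - z)%C < d -> 0 < fst (u y)) ->
  exists l, Cdiff (fun y => csqrt (u y)) z l.
Proof.
intros Hu [d [Hd Hpos]].
set (s := fun y => csqrt (u y)).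
assert (Hz : 0 < fst (u z)). { apply Hpos. replace (z - z)%C with (RtoC 0) by ring. rewrite Cmod_0. auto. }
assert (R0 : 0 < fst (s z)) by (apply csqrt_re; auto).
assert (Key : forall y, Cmod (y - z)%C < d ->
   ((s y - s z) * (s y + s z) = u y - u z)%C /\ (s y + s z)%C <> RtoC 0 /\ fst (s z) <= Cmod (s y + s z)%C).
{ intros y Hy. pose proof (Hpos y Hy). pose proof (csqrt_re _ H).
  split. unfold s. pose proof (csqrt_sq (u y) H) as E1. pose proof (csqrt_sq (u z) Hz) as E2.
  replace (u y - u z)%C with (csqrt (u y) * csqrt (u y) - csqrt (u z) * csqrt (u z))%C by (rewrite E1, E2; reflexivity).
  generalize (csqrt (u y)) (csqrt (u z)); intros; ring.
  assert (fst (s z) <= Cmod (s y + s z)%C).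
  { eapply Rle_trans. 2: apply Cmod_re. change (fst (s y + s z)%C) with (fst (s y) + fst (s z)).
    assert (0 < fst (s y)) by exact H0. lra. }
  split; auto. intro E. rewrite E, Cmod_0 in H1. lra. }
assert (Hs : Ccont s z).
{ intros eps Heps. destruct (Cdiff_cont u z u' Hu (eps * fst (s z))) as [d1 [Hd1 H1]]. nra.
  exists (Rmin d d1). split. apply Rmin_glb_lt; auto.
  intros y Hy. assert (Hy0 : Cmod (y - z)%C < d) by (eapply Rlt_le_trans; [apply Hy|apply Rmin_l]).
  assert (Hy1 : Cmod (y - z)%C < d1) by (eapply Rlt_le_trans; [apply Hy|apply Rmin_r]).
  destruct (Key y Hy0) as [E1 [E2 E3]]. specialize (H1 y Hy1).
  rewrite <- E1, Cmod_mult in H1. pose proof (Cmod_ge_0 (s y - s z)%C).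
  apply Rmult_le_reg_r with (fst (s z)). auto. nra. }
exists (u' * (fun y => (/ (s y + s z))%C) z)%C.
apply (chain_lemma u (fun y => (/ (s y + s z))%C) s z u' Hu).
- intros eps Heps.
  assert (Hnz : (s z + s z)%C <> RtoC 0).
  { intro E. assert (fst (s z + s z)%C = fst (RtoC 0)) by (rewrite E; auto). change (fst (s z) + fst (s z) = 0) in H. lra. }
  destruct (Cinv_cont _ Hnz eps Heps) as [d2 [Hd2 H2]].
  destruct (Hs (d2 / 2)) as [d3 [Hd3 H3]]. lra.
  exists d3. split; auto. intros y Hy. apply H2.
  replace (s y + s z - (s z + s z))%C with (s y - s z)%C by ring.
  specialize (H3 y Hy). lra.
- exists d. split; auto. intros y Hy. destruct (Key y Hy) as [E1 [E2 E3]].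
  rewrite <- E1. field. auto.
Qed.

Lemma norm_series_le (a : nat -> C) (b : nat -> R) (l : C) (L : R) :
  @is_series C_AbsRing C_NormedModule a l -> is_series b L ->
  (forall n, Cmod (a n) <= b n) -> Cmod l <= L.
Proof.
intros Ha Hb Hab.
assert (H1 : is_lim_seq (fun N => @norm C_AbsRing C_NormedModule (sum_n a N)) (Cmod l)).
{ unfold is_lim_seq. simpl. eapply filterlim_comp. apply Ha. apply (@filterlim_norm C_AbsRing C_NormedModule). }
assert (H2 : is_lim_seq (sum_n b) L) by exact Hb.
assert (H3 : forall N, @norm C_AbsRing C_NormedModule (sum_n a N) <= sum_n b N).
{ intros N. eapply Rle_trans. apply (@norm_sum_n_m C_AbsRing C_NormedModule a 0 N). apply sum_n_m_le. exact Hab. }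
pose proof (is_lim_seq_le _ _ _ _ H3 H1 H2). simpl in H. exact H.
Qed.

Definition PS (c : nat -> C) (z : C) : C :=
  epsilon (inhabits (RtoC 0)) (fun l => @is_pseries C_AbsRing C_NormedModule c z l).

Lemma PS_correct c z : (exists l, @is_pseries C_AbsRing C_NormedModule c z l) ->
  @is_pseries C_AbsRing C_NormedModule c z (PS c z).
Proof. intros H. unfold PS. apply epsilon_spec. exact H. Qed.

Lemma PS_unique c z l : @is_pseries C_AbsRing C_NormedModule c z l -> PS c z = l.
Proof.
intros H. pose proof (PS_correct c z (ex_intro _ l H)).
symmetry. eapply (@filterlim_locally_unique _ C_AbsRing C_NormedModule). 2: exact H. 2: exact H0.
apply Proper_StrongProper, eventually_filter.
Qed.

Lemma ex_poly_geom (r : R) : 0 <= r < 1 ->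
  ex_series (fun n => INR (S n) * INR (S (S n)) * r ^ n).
Proof.
intros Hr.
assert (HC : CV_radius (fun _ : nat => 1) = 1).
{ rewrite (CV_radius_finite_DAlembert _ 1). f_equal. apply Rinv_1.
  intros; apply R1_neq_R0. apply Rlt_0_1. eapply is_lim_seq_ext. 2: apply is_lim_seq_const.
  intros n; simpl. unfold Rdiv. rewrite Rinv_1, Rmult_1_r, Rabs_R1. reflexivity. }
assert (H : ex_pseries (PS_derive (PS_derive (fun _ : nat => 1))) r).
{ apply CV_radius_inside. rewrite !CV_radius_derive, HC. simpl. rewrite Rabs_pos_eq; lra. }
eapply ex_series_ext. 2: exact H. intros n. unfold PS_derive. 
change (scal (pow_n r n) (INR (S n) * (INR (S (S n)) * 1))) with (pow_n r n * (INR (S n) * (INR (S (S n)) * 1))).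
rewrite pow_n_pow, Rmult_1_r. apply Rmult_comm.
Qed.

Definition Pn (y z : C) (n : nat) : C :=
  (Cpow y n - Cpow z n - RtoC (INR n) * (y - z) * Cpow z (n - 1))%C.

Lemma Pn_rec (y z : C) n : Pn y z (S n) =
  (y * Pn y z n + RtoC (INR n) * (y - z) * (y - z) * Cpow z (n - 1))%C.
Proof.
unfold Pn. destruct n.
- simpl. ring.
- replace (S (S n) - 1)%nat with (S n) by lia. replace (S n - 1)%nat with n by lia.
  rewrite (S_INR (S n)), RtoC_plus. rewrite !Cpow_S.
  generalize (Cpow y n) (Cpow z n) (RtoC (INR (S n))). intros. ring.
Qed.

Lemma Pn_bound (y z : C) (r : R) n : Cmod y <= r -> Cmod z <= r -> 0 < r ->
  r * r * Cmod (Pn y z n) <= INR n * INR n * r ^ n * (Cmod (y - z)%C * Cmod (y - z)%C).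
Proof.
intros Hy Hz Hr. set (E := (Cmod (y - z)%C * Cmod (y - z)%C)).
assert (HE : 0 <= E) by (unfold E; pose proof (Cmod_ge_0 (y - z)%C); nra).
induction n.
- unfold Pn. simpl. replace (1 - 1 - 0 * (y - z) * 1)%C with (RtoC 0) by ring.
  rewrite Cmod_0. lra.
- rewrite Pn_rec.
  assert (HX : r * r * Cmod (RtoC (INR n) * (y - z) * (y - z) * Cpow z (n - 1))%C <= INR n * r ^ (S n) * E).
  { rewrite !Cmod_mult, Cmod_R, Rabs_pos_eq by apply pos_INR. rewrite Cmod_pow.
    destruct n.
    - simpl. lra.
    - replace (S n - 1)%nat with n by lia.
      assert (Cmod z ^ n <= r ^ n) by (apply pow_incr; split; [apply Cmod_ge_0|auto]).
      pose proof (pos_INR (S n)). pose proof (pow_le (Cmod z) n (Cmod_ge_0 z)).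
      change (r ^ S (S n)) with (r * (r * r ^ n)). unfold E. pose proof (Cmod_ge_0 (y - z)%C). 
      set (K := INR (S n) * (Cmod (y - z)%C * Cmod (y - z)%C)).
      assert (0 <= K) by (unfold K; nra).
      assert (r * r * Cmod z ^ n <= r * r * r ^ n) by (apply Rmult_le_compat_l; nra).
      replace (r * r * (INR (S n) * Cmod (y - z)%C * Cmod (y - z)%C * Cmod z ^ n)) with (K * (r * r * Cmod z ^ n)) by (unfold K; ring).
      replace (INR (S n) * (r * (r * r ^ n)) * (Cmod (y - z)%C * Cmod (y - z)%C)) with (K * (r * r * r ^ n)) by (unfold K; ring).
      apply Rmult_le_compat_l; auto. }
  eapply Rle_trans. apply Rmult_le_compat_l. nra. apply Cmod_triangle.
  rewrite Cmod_mult. rewrite S_INR. simpl pow.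
  pose proof (Cmod_ge_0 (Pn y z n)). pose proof (pos_INR n). pose proof (pow_le r n).
  assert (r * (r * r * Cmod (Pn y z n)) <= r * (INR n * INR n * r ^ n * E)) by (apply Rmult_le_compat_l; lra).
  assert (Cmod y * (r * r * Cmod (Pn y z n)) <= r * (r * r * Cmod (Pn y z n))) by (apply Rmult_le_compat_r; nra).
  simpl pow in HX. 
  assert (0 <= INR n * (r * r ^ n) * E) by (apply Rmult_le_pos; [apply Rmult_le_pos|]; nra).
  assert (HT : 0 <= r * r ^ n * E) by (apply Rmult_le_pos; [|auto]; apply Rmult_le_pos; nra).
  set (T := r * r ^ n * E) in *.
  replace (r * (INR n * INR n * r ^ n * E)) with (INR n * INR n * T) in H2 by (unfold T; ring).
  replace (INR n * (r * r ^ n) * E) with (INR n * T) in HX by (unfold T; ring).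
  replace ((INR n + 1) * (INR n + 1) * (r * r ^ n) * E) with (INR n * INR n * T + INR n * T + (INR n + 1) * T) by (unfold T; ring).
  assert (0 <= (INR n + 1) * T) by nra.
  lra.
Qed.

Lemma pow_n_C (z : C) n : @pow_n C_AbsRing z n = Cpow z n.
Proof. induction n; simpl; auto. Qed.

Lemma PS_ex (c : nat -> C) (z : C) (b : nat -> R) :
  (forall n, Cmod (c n) * Cmod z ^ n <= b n) -> ex_series b ->
  exists l, @is_pseries C_AbsRing C_NormedModule c z l.
Proof.
intros Hb Hex. apply (@ex_series_le C_AbsRing C_CompleteNormedModule _ b); auto.
intros n. change (Cmod (Cpow z n * c n)%C <= b n).
rewrite Cmod_mult, Cmod_pow, Rmult_comm. auto.
Qed.

Lemma PS_series (c : nat -> C) (z l : C) : @is_pseries C_AbsRing C_NormedModule c z l ->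
  @is_series C_AbsRing C_NormedModule (fun n => Cpow z n * c n)%C l.
Proof.
intros H. eapply is_series_ext. 2: exact H. intros n. simpl. rewrite pow_n_C. reflexivity.
Qed.

Lemma PS_deriv (c : nat -> C) (M : R) (z : C) : (forall n, Cmod (c n) <= M) -> Cmod z < 1 ->
  Cdiff (PS c) z (PS (fun n => RtoC (INR (S n)) * c (S n))%C z).
Proof.
intros Hc Hz.
assert (HM : 0 <= M) by (eapply Rle_trans; [apply Cmod_ge_0|apply (Hc 0%nat)]).
pose proof (Cmod_ge_0 z) as Hz0.
set (r := (1 + Cmod z) / 2).
assert (Hr : 0 < r < 1) by (unfold r; lra). assert (Hzr : Cmod z < r) by (unfold r; lra).
set (B := fun n => INR (S n) * INR (S (S n)) * r ^ n).
assert (HB : ex_series B) by (apply ex_poly_geom; lra).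
set (SB := Series B).
assert (HSB : is_series B SB) by (apply Series_correct; auto).
assert (Hfac : forall n, 1 <= INR (S n) * INR (S (S n))).
{ intros n. rewrite !S_INR. pose proof (pos_INR n). nra. }
assert (Hfac2 : forall n, INR (S n) <= INR (S n) * INR (S (S n))).
{ intros n. rewrite !S_INR. pose proof (pos_INR n). nra. }
assert (Hfac3 : forall n, INR n * INR n <= INR (S n) * INR (S (S n))).
{ intros n. rewrite !S_INR. pose proof (pos_INR n). nra. }
assert (Hrn : forall n, 0 <= r ^ n) by (intros; apply pow_le; lra).
assert (Hex : forall y, Cmod y <= r -> @is_pseries C_AbsRing C_NormedModule c y (PS c y)).
{ intros y Hy. apply PS_correct. apply (PS_ex _ _ (fun n => M * B n)).
  2: { apply (@ex_series_scal_l R_AbsRing R_NormedModule M B HB). }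
  intros n. unfold B. assert (Cmod y ^ n <= r ^ n) by (apply pow_incr; split; [apply Cmod_ge_0|auto]).
  pose proof (pow_le (Cmod y) n (Cmod_ge_0 y)). pose proof (Hc n). pose proof (Cmod_ge_0 (c n)).
  specialize (Hfac n). specialize (Hrn n).
  apply Rle_trans with (M * r ^ n). apply Rmult_le_compat; auto.
  rewrite <- Rmult_assoc. apply Rmult_le_compat_r; auto. nra. }
set (d := fun n => (RtoC (INR (S n)) * c (S n))%C).
assert (Hd : @is_pseries C_AbsRing C_NormedModule d z (PS d z)).
{ apply PS_correct. apply (PS_ex _ _ (fun n => M * B n)).
  2: { apply (@ex_series_scal_l R_AbsRing R_NormedModule M B HB). }
  intros n. unfold B, d. assert (Cmod z ^ n <= r ^ n) by (apply pow_incr; split; [apply Cmod_ge_0|lra]).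
  pose proof (pow_le (Cmod z) n (Cmod_ge_0 z)). pose proof (Hc (S n)). pose proof (Cmod_ge_0 (c (S n))).
  specialize (Hfac2 n). specialize (Hrn n). pose proof (pos_INR (S n)).
  rewrite Cmod_mult, Cmod_R, Rabs_pos_eq by auto.
  apply Rle_trans with (INR (S n) * M * r ^ n). apply Rmult_le_compat; auto. nra.
  apply Rmult_le_compat_l; auto.
  replace (M * (INR (S n) * INR (S (S n)) * r ^ n)) with ((INR (S n) * INR (S (S n))) * M * r ^ n) by ring.
  apply Rmult_le_compat_r; auto. apply Rmult_le_compat_r; auto. }
set (K := M * SB / (r * r)).
assert (HSB0 : 0 <= SB).
{ assert (H0 : Series (fun n => 0 * B n) <= SB).
  { apply Series_le; auto. intros n. unfold B. specialize (Hfac n). specialize (Hrn n). split; nra. }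
  rewrite Series_scal_l, Rmult_0_l in H0. exact H0. }
assert (HK : 0 <= K) by (unfold K; apply Rmult_le_pos; [nra|]; left; apply Rinv_0_lt_compat; nra).
intros eps Heps.
exists (Rmin (r - Cmod z) (eps / (K + 1))). split.
{ apply Rmin_glb_lt. lra. apply Rdiv_lt_0_compat; lra. }
intros y Hy.
assert (Hy1 : Cmod (y - z)%C < r - Cmod z) by (eapply Rlt_le_trans; [apply Hy|apply Rmin_l]).
assert (Hy2 : Cmod (y - z)%C < eps / (K + 1)) by (eapply Rlt_le_trans; [apply Hy|apply Rmin_r]).
assert (Hyr : Cmod y <= r).
{ pose proof (Cmod_triangle (y - z)%C z). replace (y - z + z)%C with y in H by ring. lra. }
pose proof (PS_series _ _ _ (Hex y Hyr)) as Sy.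
pose proof (PS_series _ _ _ (Hex z (Rlt_le _ _ Hzr))) as Sz.
pose proof (PS_series _ _ _ Hd) as Sd.
set (e := fun n => (RtoC (INR n) * c n * Cpow z (n - 1))%C).
assert (Se : @is_series C_AbsRing C_NormedModule e (PS d z)).
{ apply is_series_decr_1. 
  match goal with |- is_series _ ?L => replace L with (PS d z) end.
  2: { unfold e. simpl. change (PS d z = (PS d z + - (0 * c 0%nat * 1))%C). ring. }
  eapply is_series_ext. 2: exact Sd.
  intros n. unfold e, d. simpl (S n - 1)%nat. replace (n - 0)%nat with n by lia.
  apply Cmult_comm. }
pose proof (@is_series_scal C_AbsRing C_NormedModule (y - z)%C _ _ Se) as Se2.
pose proof (@is_series_minus C_AbsRing C_NormedModule _ _ _ _ Sy Sz) as S1.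
pose proof (@is_series_minus C_AbsRing C_NormedModule _ _ _ _ S1 Se2) as S2.
set (E := Cmod (y - z)%C * Cmod (y - z)%C).
assert (HE : 0 <= E) by (unfold E; pose proof (Cmod_ge_0 (y - z)%C); nra).
assert (Hbnd := norm_series_le _ (fun n => M * E / (r * r) * B n) _ (M * E / (r * r) * SB) S2).
assert (Hfin : Cmod (PS c y - PS c z - (y - z) * PS d z)%C <= K * E).
{ replace (K * E) with (M * E / (r * r) * SB) by (unfold K; field; lra).
  apply Hbnd. apply (@is_series_scal R_AbsRing R_NormedModule). auto.
  intros n. 
  assert (EQ : (c n * Pn y z n)%C = (Cpow y n * c n + - (Cpow z n * c n) + - ((y - z) * e n))%C).
  { unfold e, Pn. generalize (Cpow y n) (Cpow z n) (Cpow z (n - 1)) (RtoC (INR n)) (c n). intros; ring. }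
  change (Cmod (Cpow y n * c n + - (Cpow z n * c n) + - ((y - z) * e n))%C <= M * E / (r * r) * B n).
  rewrite <- EQ.
  rewrite Cmod_mult.
  pose proof (Pn_bound y z r n Hyr (Rlt_le _ _ Hzr) (proj1 Hr)).
  pose proof (Cmod_ge_0 (Pn y z n)). pose proof (Hc n). pose proof (Cmod_ge_0 (c n)).
  assert (Cmod (Pn y z n) <= INR n * INR n * r ^ n * E / (r * r)).
  { apply Rmult_le_reg_l with (r * r). nra. unfold Rdiv. 
    replace (r * r * (INR n * INR n * r ^ n * E * / (r * r))) with (INR n * INR n * r ^ n * E) by (field; lra). unfold E in *; lra. }
  apply Rle_trans with (M * (INR n * INR n * r ^ n * E / (r * r))).
  apply Rmult_le_compat; auto.
  unfold B. specialize (Hfac3 n). specialize (Hrn n).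
  replace (M * (INR n * INR n * r ^ n * E / (r * r))) with ((M * E / (r * r)) * r ^ n * (INR n * INR n)) by (field; lra).
  replace (M * E / (r * r) * (INR (S n) * INR (S (S n)) * r ^ n)) with ((M * E / (r * r)) * r ^ n * (INR (S n) * INR (S (S n)))) by ring.
  apply Rmult_le_compat_l; auto. apply Rmult_le_pos; auto. unfold Rdiv. apply Rmult_le_pos. nra.
  left; apply Rinv_0_lt_compat; nra. }
eapply Rle_trans. apply Hfin. unfold E.
pose proof (Cmod_ge_0 (y - z)%C).
assert (K * Cmod (y - z)%C <= eps).
{ apply Rle_trans with ((K + 1) * Cmod (y - z)%C). nra.
  apply Rmult_le_reg_r with (/ (K + 1)). apply Rinv_0_lt_compat; lra.
  replace ((K + 1) * Cmod (y - z)%C * / (K + 1)) with (Cmod (y - z)%C) by (field; lra). 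
  unfold Rdiv in Hy2. lra. }
nra.
Qed.

Lemma is_series_ind {K : AbsRing} {V : NormedModule K} (m : nat) (v : V) :
  is_series (fun n => if Nat.eqb n m then v else zero) v.
Proof.
set (a := fun n => if Nat.eqb n m then v else zero).
assert (H : forall n, sum_n a n = if Nat.leb m n then v else zero).
{ induction n.
  - rewrite sum_O. unfold a. destruct m; simpl; auto.
  - rewrite sum_Sn, IHn. unfold a.
    destruct (Nat.leb m n) eqn:E1.
    + apply Nat.leb_le in E1. assert (Nat.eqb (S n) m = false) by (apply Nat.eqb_neq; lia).
      assert (Nat.leb m (S n) = true) by (apply Nat.leb_le; lia). rewrite H, H0. apply plus_zero_r.
    + apply Nat.leb_gt in E1. destruct (Nat.eqb (S n) m) eqn:E2.
      * apply Nat.eqb_eq in E2. assert (Nat.leb m (S n) = true) by (apply Nat.leb_le; lia). rewrite H. apply plus_zero_l.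
      * apply Nat.eqb_neq in E2. assert (Nat.leb m (S n) = false) by (apply Nat.leb_gt; lia). rewrite H. apply plus_zero_l. }
unfold is_series. apply filterlim_ext_loc with (fun _ => v).
exists m. intros n Hn. rewrite H. assert (Nat.leb m n = true) by (apply Nat.leb_le; lia). rewrite H0. auto.
apply filterlim_const.
Qed.

Lemma series_unique_C (a : nat -> C) (l1 l2 : C) :
  @is_series C_AbsRing C_NormedModule a l1 -> @is_series C_AbsRing C_NormedModule a l2 -> l1 = l2.
Proof.
intros H1 H2. eapply (@filterlim_locally_unique _ C_AbsRing C_NormedModule). 2: exact H1. 2: exact H2.
apply Proper_StrongProper, eventually_filter.
Qed.

Lemma Cdiff_ext_loc (f g : C -> C) (z l : C) :
  (exists d, 0 < d /\ forall y, Cmod (y - z)%C < d -> f y = g y) -> Cdiff f z l -> Cdiff g z l.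
Proof.
intros [d [Hd Hfg]] Hf eps Heps. destruct (Hf eps Heps) as [d1 [Hd1 H1]].
exists (Rmin d d1). split. apply Rmin_glb_lt; auto.
intros y Hy. assert (Cmod (y - z)%C < d) by (eapply Rlt_le_trans; [apply Hy|apply Rmin_l]).
assert (Cmod (y - z)%C < d1) by (eapply Rlt_le_trans; [apply Hy|apply Rmin_r]).
rewrite <- (Hfg y), <- (Hfg z); auto. replace (z - z)%C with (RtoC 0) by ring. rewrite Cmod_0; auto.
Qed.

Lemma Cdiff_shift (f : C -> C) (z l k : C) : Cdiff f z l -> Cdiff (fun y => f y - k)%C z l.
Proof.
intros H eps Heps. destruct (H eps Heps) as [d [Hd H1]]. exists d. split; auto.
intros y Hy. replace (f y - k - (f z - k) - (y - z) * l)%C with (f y - f z - (y - z) * l)%C by ring. auto.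
Qed.

Lemma ex_derive_Cdiff (f : C -> C) (z : C) : ex_derive f z -> exists l, Cdiff f z l.
Proof. intros [l H]. exists l. apply is_derive_Cdiff. auto. Qed.

Lemma Cdiff_ex_derive (f : C -> C) (z l : C) : Cdiff f z l -> ex_derive f z.
Proof. intros H. exists l. apply Cdiff_is_derive. auto. Qed.

Definition Wseq (a : nat -> C) (k : nat) : R := (2 * INR (k + 2) - 1) * Cmod (a (k + 2)%nat).
Definition gc (a : nat -> C) (n : nat) : C := coeffs a (S n).
Definition dc (a : nat -> C) (n : nat) : C := (RtoC (INR (S n)) * coeffs a (S n))%C.

Lemma Wseq_pos a k : 0 <= Wseq a k.
Proof. unfold Wseq. apply Rmult_le_pos. rewrite plus_INR. simpl. pose proof (pos_INR k). lra. apply Cmod_ge_0. Qed.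

Lemma term_le_series (b : nat -> R) k : (forall n, 0 <= b n) -> ex_series b -> b k <= Series b.
Proof.
intros Hb Hex.
assert (Series (fun n => if Nat.eqb n k then b k else 0) <= Series b).
{ apply Series_le; auto. intros n. destruct (Nat.eqb n k) eqn:E. apply Nat.eqb_eq in E. subst. split; [auto|lra].
  split; [lra|auto]. }
rewrite (is_series_unique _ (b k)) in H. auto.
apply (@is_series_ind R_AbsRing R_NormedModule).
Qed.

Lemma coef_bound a : ex_series (Wseq a) -> Series (Wseq a) <= 1 ->
  forall n, INR n * Cmod (coeffs a n) <= 1.
Proof.
intros Hex HS n. destruct n as [|[|k]].
- simpl. rewrite Cmod_0. lra.
- simpl. rewrite Cmod_1. lra.
- pose proof (term_le_series (Wseq a) k (Wseq_pos a) Hex).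
  unfold Wseq at 1 in H. replace (k + 2)%nat with (S (S k)) in H by lia. simpl coeffs.
  pose proof (Cmod_ge_0 (a (S (S k)))). pose proof (pos_INR (S (S k))).
  assert (1 <= INR (S (S k))) by (rewrite !S_INR; pose proof (pos_INR k); lra).
  nra.
Qed.

Lemma coef_bounds a : ex_series (Wseq a) -> Series (Wseq a) <= 1 ->
  (forall n, Cmod (coeffs a n) <= 1) /\ (forall n, Cmod (gc a n) <= 1) /\ (forall n, Cmod (dc a n) <= 1).
Proof.
intros Hex HS. pose proof (coef_bound a Hex HS) as H.
assert (H1 : forall n, Cmod (coeffs a (S n)) <= 1).
{ intros n. specialize (H (S n)). pose proof (Cmod_ge_0 (coeffs a (S n))).
  assert (1 <= INR (S n)) by (rewrite S_INR; pose proof (pos_INR n); lra). nra. }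
split; [|split].
- intros [|n]. simpl. rewrite Cmod_0. lra. auto.
- intros n. apply H1.
- intros n. unfold dc. rewrite Cmod_mult, Cmod_R, Rabs_pos_eq by apply pos_INR. apply H.
Qed.

Lemma PS_bounded (c : nat -> C) (M : R) (z : C) : (forall n, Cmod (c n) <= M) -> Cmod z < 1 ->
  @is_pseries C_AbsRing C_NormedModule c z (PS c z).
Proof.
intros Hc Hz. apply PS_correct. apply (PS_ex _ _ (fun n => M * Cmod z ^ n)).
- intros n. apply Rmult_le_compat_r. apply pow_le, Cmod_ge_0. auto.
- apply (@ex_series_scal_l R_AbsRing R_NormedModule M (fun n => Cmod z ^ n)).
  exists (/ (1 - Cmod z)). apply is_series_geom. rewrite Rabs_pos_eq; auto. apply Cmod_ge_0.
Qed.

Lemma est (a : nat -> C) (z : C) : ex_series (Wseq a) -> Series (Wseq a) <= 1 -> Cmod z < 1 ->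
  2 * Cmod (PS (dc a) z - PS (gc a) z)%C + Cmod (PS (gc a) z - 1)%C <= Cmod z.
Proof.
intros Hex HS Hz. destruct (coef_bounds a Hex HS) as [Hc [Hg Hd]].
pose proof (Cmod_ge_0 z) as Hz0.
pose proof (PS_series _ _ _ (PS_bounded _ _ _ Hg Hz)) as Sg.
pose proof (PS_series _ _ _ (PS_bounded _ _ _ Hd Hz)) as Sd.
set (G := PS (gc a) z) in *. set (F := PS (dc a) z) in *.
assert (Hzn : forall n, Cmod z ^ (S n) <= Cmod z).
{ intros n. simpl. assert (Cmod z ^ n <= 1). { rewrite <- (pow1 n). apply pow_incr. lra. } nra. }
set (b1 := fun n => Cmod (a (S (S n))) * Cmod z ^ (S n)).
set (b2 := fun n => INR (S n) * Cmod (a (S (S n))) * Cmod z ^ (S n)).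
assert (HW : forall n, Wseq a n = (2 * INR (S n) + 1) * Cmod (a (S (S n)))).
{ intros n. unfold Wseq. replace (n + 2)%nat with (S (S n)) by lia. rewrite !S_INR. ring. }
assert (Hb1 : forall n, 0 <= b1 n <= Wseq a n).
{ intros n. unfold b1. rewrite HW. pose proof (Cmod_ge_0 (a (S (S n)))). pose proof (pos_INR (S n)).
  pose proof (Hzn n). pose proof (pow_le _ (S n) Hz0). split. nra. nra. }
assert (Hb2 : forall n, 0 <= b2 n <= Wseq a n).
{ intros n. unfold b2. rewrite HW. pose proof (Cmod_ge_0 (a (S (S n)))). pose proof (pos_INR (S n)).
  pose proof (Hzn n). pose proof (pow_le _ (S n) Hz0). split. 
  apply Rmult_le_pos; [|auto]. nra.
  assert (INR (S n) * Cmod (a (S (S n))) * Cmod z ^ S n <= INR (S n) * Cmod (a (S (S n)))).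
  { rewrite <- (Rmult_1_r (INR (S n) * Cmod (a (S (S n))))) at 2. apply Rmult_le_compat_l. nra. lra. }
  nra. }
assert (Eb1 : ex_series b1) by (apply (ex_series_le b1 (Wseq a)); auto; intros n; rewrite Rabs_pos_eq; apply Hb1).
assert (Eb2 : ex_series b2) by (apply (ex_series_le b2 (Wseq a)); auto; intros n; rewrite Rabs_pos_eq; apply Hb2).
assert (S1 : @is_series C_AbsRing C_NormedModule (fun n => Cpow z (S n) * gc a (S n))%C (G - 1)%C).
{ apply (@is_series_incr_1 C_AbsRing C_NormedModule (fun n => Cpow z n * gc a n)%C).
  match goal with |- is_series _ ?L => replace L with G end. exact Sg.
  change (G = G - 1 + Cpow z 0 * coeffs a 1)%C. simpl. ring. }
assert (B1 : Cmod (G - 1)%C <= Series b1).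
{ apply (norm_series_le _ b1 _ _ S1). apply Series_correct; auto.
  intros n. unfold b1, gc. simpl coeffs. rewrite Cmod_mult, Cmod_pow. right; ring. }
assert (S2 : @is_series C_AbsRing C_NormedModule (fun n => Cpow z (S n) * (RtoC (INR (S n)) * a (S (S n))))%C (F - G)%C).
{ pose proof (@is_series_minus C_AbsRing C_NormedModule _ _ _ _ Sd Sg) as S0.
  apply (@is_series_incr_1 C_AbsRing C_NormedModule (fun n => Cpow z n * (RtoC (INR n) * coeffs a (S n)))%C).
  match goal with |- is_series _ ?L => replace L with (F - G)%C end.
  eapply is_series_ext. 2: exact S0. intros n. unfold dc, gc. simpl coeffs.
  change ((Cpow z n * (RtoC (INR (S n)) * coeffs a (S n)) + - (Cpow z n * coeffs a (S n)))%C =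
     (Cpow z n * (RtoC (INR n) * coeffs a (S n)))%C).
  rewrite (S_INR n), RtoC_plus. generalize (Cpow z n) (RtoC (INR n)) (coeffs a (S n)). intros; ring.
  change (F - G = F - G + Cpow z 0 * (RtoC (INR 0) * coeffs a 1))%C. simpl. ring. }
assert (B2 : Cmod (F - G)%C <= Series b2).
{ apply (norm_series_le _ b2 _ _ S2). apply Series_correct; auto.
  intros n. unfold b2. rewrite !Cmod_mult, Cmod_pow, Cmod_R, Rabs_pos_eq by apply pos_INR. right; ring. }
assert (Hsum : 2 * Series b2 + Series b1 <= Cmod z).
{ rewrite <- Series_scal_l, <- Series_plus.
  2: apply (@ex_series_scal_l R_AbsRing R_NormedModule 2 b2 Eb2).
  2: auto.
  apply Rle_trans with (Series (fun n => Cmod z * Wseq a n)).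
  apply Series_le. intros n. unfold b1, b2. rewrite HW. pose proof (Cmod_ge_0 (a (S (S n)))). pose proof (pos_INR (S n)).
  pose proof (Hzn n). pose proof (pow_le _ (S n) Hz0). split. 
  assert (0 <= INR (S n) * Cmod (a (S (S n))) * Cmod z ^ S n) by (apply Rmult_le_pos; nra). nra.
  replace (2 * (INR (S n) * Cmod (a (S (S n))) * Cmod z ^ S n) + Cmod (a (S (S n))) * Cmod z ^ S n)
    with ((2 * INR (S n) + 1) * Cmod (a (S (S n))) * Cmod z ^ S n) by ring.
  replace (Cmod z * ((2 * INR (S n) + 1) * Cmod (a (S (S n))))) with ((2 * INR (S n) + 1) * Cmod (a (S (S n))) * Cmod z) by ring.
  apply Rmult_le_compat_l; auto. nra.
  apply (@ex_series_scal_l R_AbsRing R_NormedModule (Cmod z) (Wseq a) Hex).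
  rewrite Series_scal_l. rewrite <- (Rmult_1_r (Cmod z)) at 2. apply Rmult_le_compat_l; auto. }
lra.
Qed.

Lemma csqrt_1 : csqrt (RtoC 1) = RtoC 1.
Proof.
unfold csqrt. rewrite Cmod_1. simpl. replace ((1 + 1) / 2) with 1 by field. rewrite sqrt_1.
unfold RtoC. f_equal. field.
Qed.

Lemma RtoC2_neq : RtoC 2 <> RtoC 0.
Proof. intro H. injection H. lra. Qed.

Lemma ind0_series (c : nat -> C) (v : C) : c 0%nat = v ->
  @is_pseries C_AbsRing C_NormedModule c (RtoC 0) v.
Proof.
intros Hv. eapply is_series_ext. 2: apply (@is_series_ind C_AbsRing C_NormedModule 0 v).
intros [|n]; simpl.
- change (v = Cmult (RtoC 1) (c 0%nat)). rewrite Hv. ring.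
- change (RtoC 0 = Cmult (Cmult (RtoC 0) (@pow_n C_AbsRing (RtoC 0) n)) (c (S n))). ring.
Qed.

Lemma part1 (a : nat -> C) (f : C -> C) :
  (forall z, inD z -> @is_pseries C_AbsRing C_NormedModule (coeffs a) z (f z)) ->
  ex_series (Wseq a) -> Series (Wseq a) <= 1 -> Scar f.
Proof.
intros Hf Hex HS.
destruct (coef_bounds a Hex HS) as [Hc [Hg Hd]].
set (G := fun z => PS (gc a) z). set (F := fun z => PS (dc a) z).
assert (Hfz : forall z, Cmod z < 1 -> f z = PS (coeffs a) z).
{ intros z Hz. symmetry. apply PS_unique. apply Hf. exact Hz. }
assert (HfG : forall z, Cmod z < 1 -> f z = (z * G z)%C).
{ intros z Hz. pose proof (PS_series _ _ _ (Hf z Hz)) as Sf.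
  pose proof (PS_series _ _ _ (PS_bounded _ _ _ Hg Hz)) as Sg.
  apply (@is_series_scal C_AbsRing C_NormedModule z) in Sg.
  assert (Sf' : @is_series C_AbsRing C_NormedModule (fun n => Cpow z (S n) * coeffs a (S n))%C (f z)).
  { apply (@is_series_incr_1 C_AbsRing C_NormedModule (fun n => Cpow z n * coeffs a n)%C).
    match goal with |- is_series _ ?L => replace L with (f z) end. auto.
    change (f z = f z + Cpow z 0 * RtoC 0)%C. ring. }
  clear Sf. rename Sf' into Sf.
  apply (series_unique_C _ _ _ Sf). eapply is_series_ext. 2: exact Sg.
  intros n. unfold gc. change ((z * (Cpow z n * coeffs a (S n)))%C = (Cpow z (S n) * coeffs a (S n))%C).
  rewrite Cpow_S. ring. }
assert (Hdiff : forall z, Cmod z < 1 -> Cdiff f z (F z)).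
{ intros z Hz. apply (Cdiff_ext_loc (PS (coeffs a))).
  - exists (1 - Cmod z). split. lra. intros y Hy. symmetry. apply Hfz.
    pose proof (Cmod_triangle (y - z)%C z). replace (y - z + z)%C with y in H by ring. lra.
  - apply (PS_deriv (coeffs a) 1 z Hc Hz). }
assert (HCd : forall z, Cmod z < 1 -> C_derive f z = F z).
{ intros z Hz. apply is_C_derive_unique. apply Cdiff_is_derive. auto. }
assert (H0D : Cmod (RtoC 0) < 1) by (rewrite Cmod_0; lra).
assert (HG0 : G (RtoC 0) = RtoC 1).
{ apply PS_unique. apply ind0_series. reflexivity. }
assert (HF0 : F (RtoC 0) = RtoC 1).
{ apply PS_unique. apply ind0_series. unfold dc. simpl. ring. }
assert (Hest : forall z, Cmod z < 1 -> 2 * Cmod (F z - G z)%C + Cmod (G z - 1)%C <= Cmod z).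
{ intros z Hz. apply est; auto. }
assert (HGnz : forall z, Cmod z < 1 -> G z <> RtoC 0).
{ intros z Hz E. specialize (Hest z Hz). rewrite E in Hest.
  replace (RtoC 0 - 1)%C with (- RtoC 1)%C in Hest by ring. rewrite Cmod_opp, Cmod_1 in Hest.
  pose proof (Cmod_ge_0 (F z - RtoC 0)%C). lra. }
set (u := fun z => (RtoC 2 * (F z * / G z) - 1)%C).
assert (Hu1 : forall z, Cmod z < 1 -> Cmod (u z - 1)%C < 1).
{ intros z Hz. specialize (Hest z Hz). pose proof (HGnz z Hz).
  unfold u. replace (RtoC 2 * (F z * / G z) - 1 - 1)%C with (RtoC 2 * ((F z - G z) / G z))%C
    by (field; auto).
  rewrite Cmod_mult, Cmod_div by auto. rewrite Cmod_R, Rabs_pos_eq by lra.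
  pose proof (Cmod_triangle (- (G z - 1))%C (G z)). replace (- (G z - 1) + G z)%C with (RtoC 1) in H0 by ring.
  rewrite Cmod_1, Cmod_opp in H0. 
  assert (0 < Cmod (G z)) by (apply Cmod_gt_0; auto).
  pose proof (Cmod_ge_0 (F z - G z)%C). pose proof (Cmod_ge_0 (G z - 1)%C).
  apply Rmult_lt_reg_r with (Cmod (G z)); auto. unfold Rdiv.
  replace (2 * (Cmod (F z - G z)%C * / Cmod (G z)) * Cmod (G z)) with (2 * Cmod (F z - G z)%C) by (field; lra).
  lra. }
assert (Hupos : forall z, Cmod z < 1 -> 0 < fst (u z)).
{ intros z Hz. pose proof (Cmod_re' (u z - 1)%C). specialize (Hu1 z Hz). 
  destruct (u z) as [p q]. simpl in *. lra. }
assert (Hsq : forall z, Cmod z < 1 -> (csqrt (u z) * csqrt (u z))%C = u z).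
{ intros z Hz. apply csqrt_sq. auto. }
split; [|split].
-
  split; [|split].
  + intros z Hz. eapply Cdiff_ex_derive. apply Hdiff. exact Hz.
  + rewrite (HfG _ H0D). ring.
  + rewrite (HCd _ H0D). exact HF0.
- intros z Hz Hz0. rewrite (HfG z Hz). apply Cmult_neq_0; auto.
- exists (fun z => (csqrt (u z) - 1)%C). split; [|split; [|split]].
  + intros z Hz. red in Hz.
    pose proof (Cdiff_is_derive_K _ _ _ (PS_deriv (gc a) 1 z Hg Hz)) as HGd.
    pose proof (Cdiff_is_derive_K _ _ _ (PS_deriv (dc a) 1 z Hd Hz)) as HFd.
    destruct (Cinv_diff (G z) (HGnz z Hz)) as [lI0 HlI0].
    pose proof (Cdiff_is_derive_K _ _ _ HlI0) as HId.
    pose proof (@is_derive_comp C_AbsRing (AbsRing_NormedModule C_AbsRing) Cinv G z _ _ HId HGd) as HIG.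
    pose proof (@is_derive_mult C_AbsRing F (fun y => Cinv (G y)) z _ _ HFd HIG Cmult_comm) as HP.
    pose proof (@is_derive_mult C_AbsRing (fun _ => RtoC 2) _ z _ _ (@is_derive_const C_AbsRing (AbsRing_NormedModule C_AbsRing) (RtoC 2) z) HP Cmult_comm) as HP2.
    pose proof (@is_derive_plus C_AbsRing (AbsRing_NormedModule C_AbsRing) _ (fun _ => (- RtoC 1)%C) z _ _ HP2 (@is_derive_const C_AbsRing (AbsRing_NormedModule C_AbsRing) (- RtoC 1)%C z)) as HP3.
    assert (HU : exists lu, Cdiff u z lu).
    { eexists. apply is_derive_Cdiff_K. eapply is_derive_ext. 2: exact HP3. intros t. reflexivity. }
    destruct HU as [lu HU].
    destruct (sqrt_diff u z _ HU) as [l Hl].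
    { exists (1 - Cmod z). split. lra. intros y Hy. apply Hupos.
      pose proof (Cmod_triangle (y - z)%C z). replace (y - z + z)%C with y in H by ring. lra. }
    eapply Cdiff_ex_derive. apply Cdiff_shift. exact Hl.
  + intros z Hz. unfold inD. apply csqrt_disk. auto.
  + assert (u (RtoC 0) = RtoC 1).
    { unfold u. rewrite HG0, HF0. field. }
    rewrite H, csqrt_1. ring.
  + intros z Hz. unfold starlike_quot. destruct (Req_EM_T (Cmod z) 0) as [E|E].
    * apply Cmod_eq_0 in E. subst z.
      assert (u (RtoC 0) = RtoC 1).
      { unfold u. rewrite HG0, HF0. field. }
      rewrite H, csqrt_1. unfold phi_car. field.
    * assert (Hz0 : z <> RtoC 0). { intro H. apply E. rewrite H. apply Cmod_0. }
      rewrite (HCd z Hz), (HfG z Hz). pose proof (HGnz z Hz). pose proof (Hsq z Hz).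
      set (s := csqrt (u z)) in *. unfold phi_car.
      replace (RtoC 1 + (s - 1) + (s - 1) * (s - 1) / RtoC 2)%C with ((s * s + 1) / RtoC 2)%C
        by (field; exact RtoC2_neq).
      rewrite H0. unfold u. field. split; auto.
Qed.

Lemma angle (x y : R) : x * x + y * y = 1 -> exists th, cos th = x /\ sin th = y.
Proof.
intros H. assert (Hx : -1 <= x <= 1) by (split; nra).
assert (Hs : sin (acos x) = Rabs y).
{ rewrite sin_acos by auto. replace (1 - x²) with (y²) by (unfold Rsqr; lra). apply sqrt_Rsqr_abs. }
destruct (Rle_dec 0 y) as [Hy|Hy].
- exists (acos x). split. apply cos_acos; auto. rewrite Hs. apply Rabs_pos_eq; auto.
- exists (- acos x). rewrite cos_neg, sin_neg, Hs, cos_acos by auto. split; auto.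
  rewrite Rabs_left1 by lra. ring.
Qed.

Lemma demoivre (t : R) k : Cpow (cos t, sin t) k = (cos (INR k * t), sin (INR k * t)).
Proof.
induction k.
- simpl. rewrite Rmult_0_l, cos_0, sin_0. reflexivity.
- rewrite Cpow_S, IHk, S_INR. unfold Cmult. simpl.
  replace ((INR k + 1) * t) with (t + INR k * t) by ring.
  rewrite cos_plus, sin_plus. f_equal; ring.
Qed.

Lemma Cmod_e (t : R) : Cmod (cos t, sin t) = 1.
Proof.
unfold Cmod. simpl. replace (cos t * (cos t * 1) + sin t * (sin t * 1)) with 1. apply sqrt_1.
pose proof (sin2_cos2 t). unfold Rsqr in H. ring_simplify in H. ring_simplify. lra.
Qed.

Lemma pow_deriv (z : C) k : @is_derive C_AbsRing (AbsRing_NormedModule C_AbsRing)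
  (fun y => Cpow y k) z (RtoC (INR k) * Cpow z (k - 1))%C.
Proof.
induction k.
- assert (E : (RtoC (INR 0) * Cpow z (0 - 1))%C = RtoC 0) by (simpl; ring). rewrite E.
  apply (@is_derive_const C_AbsRing (AbsRing_NormedModule C_AbsRing) (RtoC 1) z).
- pose proof (@is_derive_mult C_AbsRing (fun y => y) (fun y => Cpow y k) z one _ (is_derive_id z) IHk Cmult_comm) as H.
  assert (EQ : (RtoC (INR (S k)) * Cpow z (S k - 1))%C =
     (RtoC 1 * Cpow z k + z * (RtoC (INR k) * Cpow z (k - 1)))%C).
  { destruct k.
    - simpl. ring.
    - replace (S (S k) - 1)%nat with (S k) by lia. replace (S k - 1)%nat with k by lia.
      rewrite (S_INR (S k)), RtoC_plus, Cpow_S. generalize (Cpow z k) (RtoC (INR (S k))). intros; ring. }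
  rewrite EQ. exact H.
Qed.

Lemma part2_nec (n : nat) (an : C) : (2 <= n)%nat ->
  Scar (fun z => (z + an * Cpow z n)%C) -> Cmod an <= 1 / (2 * INR n - 1).
Proof.
intros Hn [_ [_ [w [_ [Hw [_ Hsub]]]]]].
destruct (Rle_lt_dec (Cmod an) (1 / (2 * INR n - 1))) as [|Hlt]; auto. exfalso.
assert (HnR : 2 <= INR n) by (apply (le_INR 2 n) in Hn; simpl in Hn; lra).
set (m := 1 / (2 * INR n - 1)) in *.
assert (Hm : 0 < m /\ m * (2 * INR n - 1) = 1).
{ unfold m. split. apply Rdiv_lt_0_compat; lra. field. lra. }
assert (Hm1 : m < 1) by nra.
set (A := Cmod an) in *.
set (r := (m + Rmin A 1) / 2).
assert (Hr : m < r /\ r < A /\ r < 1).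
{ unfold r. pose proof (Rmin_l A 1). pose proof (Rmin_r A 1).
  assert (m < Rmin A 1) by (apply Rmin_glb_lt; lra). lra. }
set (N := (n - 1)%nat).
assert (HnN : n = S N) by (unfold N; lia).
assert (HN : 1 <= INR N) by (apply (le_INR 1 N); unfold N; lia).
set (t := r / A).
assert (Ht : 0 < t < 1).
{ unfold t. split. apply Rdiv_lt_0_compat; lra. apply Rmult_lt_reg_r with A. lra.
  unfold Rdiv. rewrite Rmult_assoc, Rinv_l by lra. lra. }
set (rho := Rpower t (/ INR N)).
assert (Hrho0 : 0 < rho) by (unfold rho, Rpower; apply exp_pos).
assert (HrhoN : rho ^ N = t).
{ rewrite <- Rpower_pow by auto. unfold rho. rewrite Rpower_mult.
  replace (/ INR N * INR N) with 1 by (field; lra). apply Rpower_1. lra. }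
assert (Hrho1 : rho < 1).
{ destruct (Rlt_le_dec rho 1) as [|H]; auto. apply (pow_R1_Rle _ N) in H. lra. }
assert (HA : 0 < A) by lra.
assert (Hxy : (fst an / A) * (fst an / A) + (snd an / A) * (snd an / A) = 1).
{ pose proof (Cmod_sq an) as E. fold A in E.
  replace ((fst an / A) * (fst an / A) + (snd an / A) * (snd an / A)) with ((fst an * fst an + snd an * snd an) / (A * A)) by (field; lra).
  rewrite <- E. field. lra. }
destruct (angle _ _ Hxy) as [th [Hc Hs]].
assert (Han : an = (RtoC A * (cos th, sin th))%C).
{ rewrite Hc, Hs. destruct an as [p q]. unfold RtoC, Cmult. simpl. f_equal; field; lra. }
set (psi := (PI - th) / INR N).
set (z := (RtoC rho * (cos psi, sin psi))%C).
assert (Hzm : Cmod z = rho).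
{ unfold z. rewrite Cmod_mult, Cmod_R, Cmod_e, Rabs_pos_eq; lra. }
assert (Hz0 : z <> RtoC 0). { intro E. rewrite E, Cmod_0 in Hzm. lra. }
assert (Key : (an * Cpow z N)%C = RtoC (- r)).
{ unfold z. rewrite Cpow_mult_l, <- RtoC_pow, demoivre, HrhoN, Han.
  replace (INR N * psi) with (PI - th) by (unfold psi; field; lra).
  assert (E : ((cos th, sin th) * (cos (PI - th), sin (PI - th)))%C = RtoC (-1)).
  { unfold Cmult, RtoC. simpl. rewrite <- cos_plus.
    replace (cos th * sin (PI - th) + sin th * cos (PI - th)) with (sin (th + (PI - th))) by (rewrite sin_plus; ring).
    replace (th + (PI - th)) with PI by ring. rewrite cos_PI, sin_PI. reflexivity. }
  transitivity (RtoC A * RtoC t * ((cos th, sin th) * (cos (PI - th), sin (PI - th))))%C. ring.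
  rewrite E. rewrite <- !RtoC_mult. f_equal. unfold t. field. lra. }
assert (HzD : inD z) by (unfold inD; lra).
set (f := fun y => (y + an * Cpow y n)%C).
assert (Hder : C_derive f z = (RtoC 1 + RtoC (INR n) * (an * Cpow z N))%C).
{ apply is_C_derive_unique. apply Cdiff_is_derive. apply is_derive_Cdiff_K.
  pose proof (@is_derive_mult C_AbsRing (fun _ => an) (fun y => Cpow y n) z _ _
     (@is_derive_const C_AbsRing (AbsRing_NormedModule C_AbsRing) an z) (pow_deriv z n) Cmult_comm) as H1.
  pose proof (@is_derive_plus C_AbsRing (AbsRing_NormedModule C_AbsRing) (fun y => y) _ z _ _ (is_derive_id z) H1) as H2.
  assert (EQ : (RtoC 1 + RtoC (INR n) * (an * Cpow z N))%C =
     (RtoC 1 + (RtoC 0 * Cpow z n + an * (RtoC (INR n) * Cpow z (n - 1))))%C).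
  { replace (n - 1)%nat with N by (unfold N; lia). ring. }
  rewrite EQ. exact H2. }
assert (Hfz : f z = (z * (RtoC 1 + RtoC (- r)))%C).
{ unfold f. rewrite <- Key, HnN, Cpow_S. ring. }
specialize (Hsub z HzD). specialize (Hw z HzD). unfold inD in Hw.
unfold starlike_quot in Hsub. destruct (Req_EM_T (Cmod z) 0) as [E|_]. lra.
assert (Hsub' : (z * C_derive f z / f z)%C = phi_car (w z)) by exact Hsub. clear Hsub.
rewrite Hder, Hfz, Key in Hsub'.
set (X := (1 - INR n * r) / (1 - r)).
assert (HX : (z * (RtoC 1 + RtoC (INR n) * RtoC (- r)) / (z * (RtoC 1 + RtoC (- r))))%C = RtoC X).
{ unfold X. rewrite RtoC_div by lra.
  replace (RtoC (1 - INR n * r)) with (RtoC 1 + RtoC (INR n) * RtoC (- r))%C by (rewrite <- RtoC_mult, <- RtoC_plus; f_equal; ring).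
  replace (RtoC (1 - r)) with (RtoC 1 + RtoC (-r))%C by (rewrite <- RtoC_plus; f_equal; ring).
  assert ((RtoC 1 + RtoC (- r))%C <> RtoC 0) by (rewrite <- RtoC_plus; intro E; injection E; lra).
  field. split; auto. }
rewrite HX in Hsub'.
assert (HX2 : 2 * X <= 1).
{ unfold X. apply Rmult_le_reg_r with (1 - r). lra. unfold Rdiv.
  replace (2 * ((1 - INR n * r) * / (1 - r)) * (1 - r)) with (2 * (1 - INR n * r)) by (field; lra).
  destruct Hm as [Hm0 Hm2]. nra. }
destruct (w z) as [p q] eqn:Ewz.
assert (Hpq : p * p + q * q < 1).
{ pose proof (Cmod_sq (p, q)). simpl in H. pose proof (Cmod_ge_0 (p, q)). nra. }
assert (E2 : (RtoC 2 + RtoC 2 * (p, q) + (p, q) * (p, q))%C = RtoC (2 * X)).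
{ rewrite RtoC_mult, Hsub'. unfold phi_car. field; try exact RtoC2_neq. }
pose proof (f_equal fst E2) as E3. pose proof (f_equal snd E2) as E4. simpl in E3, E4.
assert (Hp : -1 < p) by nra.
assert (Hq : q = 0) by nra.
subst q. nra.
Qed.

Lemma part2_suf (n : nat) (an : C) : (2 <= n)%nat -> Cmod an <= 1 / (2 * INR n - 1) ->
  Scar (fun z => (z + an * Cpow z n)%C).
Proof.
intros Hn Han.
assert (HnR : 2 <= INR n) by (apply (le_INR 2 n) in Hn; simpl in Hn; lra).
set (a := fun k => if Nat.eqb k n then an else RtoC 0).
set (V := (2 * INR n - 1) * Cmod an).
assert (HW : @is_series R_AbsRing R_NormedModule (Wseq a) V).
{ eapply is_series_ext. 2: apply (@is_series_ind R_AbsRing R_NormedModule (n - 2) V).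
  intros k. unfold Wseq, a. 
  destruct (Nat.eqb_spec k (n - 2)); destruct (Nat.eqb_spec (k + 2) n); try lia.
  - unfold V. rewrite e0. reflexivity.
  - rewrite Cmod_0. change (0 = (2 * INR (k + 2) - 1) * 0). ring. }
apply (part1 a).
- intros z Hz. 
  eapply is_series_ext.
  2: apply (@is_series_plus C_AbsRing C_NormedModule _ _ _ _ (@is_series_ind C_AbsRing C_NormedModule 1 z) (@is_series_ind C_AbsRing C_NormedModule n (an * Cpow z n)%C)).
  intros k. cbv beta.
  destruct k as [|[|k]].
  + assert (Nat.eqb 0 n = false) by (apply Nat.eqb_neq; lia). rewrite H. simpl.
    change (RtoC 0 + RtoC 0 = RtoC 1 * RtoC 0)%C. ring.
  + assert (Nat.eqb 1 n = false) by (apply Nat.eqb_neq; lia). rewrite H. simpl.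
    change (z + RtoC 0 = z * RtoC 1 * RtoC 1)%C. ring.
  + replace (@pow_n C_AbsRing z (S (S k))) with (Cpow z (S (S k))) by (symmetry; apply pow_n_C).
    simpl (Nat.eqb (S (S k)) 1). simpl coeffs. unfold a.
    destruct (Nat.eqb (S (S k)) n) eqn:E.
    * apply Nat.eqb_eq in E. rewrite <- E. change (RtoC 0 + an * Cpow z (S (S k)) = Cpow z (S (S k)) * an)%C. ring.
    * change (RtoC 0 + RtoC 0 = Cpow z (S (S k)) * RtoC 0)%C. ring.
- exists V. exact HW.
- rewrite (is_series_unique _ _ HW). unfold V.
  apply Rle_trans with ((2 * INR n - 1) * (1 / (2 * INR n - 1))).
  apply Rmult_le_compat_l; [lra|auto]. right. field. lra.
Qed.

Theorem corollary3p3 :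
  (forall (a : nat -> C) (f : C -> C),
     (forall z, inD z -> @is_pseries C_AbsRing C_NormedModule (coeffs a) z (f z)) ->
     ex_series (fun k => (2 * INR (k + 2) - 1) * Cmod (a (k + 2)%nat)) ->
     Series (fun k => (2 * INR (k + 2) - 1) * Cmod (a (k + 2)%nat)) <= 1 ->
     Scar f)
  /\
  (forall (n : nat) (an : C), (2 <= n)%nat ->
     (Scar (fun z => (z + an * Cpow z n)%C) <-> Cmod an <= 1 / (2 * INR n - 1))).
Proof.
split.
- intros a f Hf Hex HS. exact (part1 a f Hf Hex HS).
- intros n an Hn. split. apply part2_nec; auto. apply part2_suf; auto.
Qed.
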